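(* Let $\mathcal{Z}_0$ be the signaling scheme output by the Split-and-Match procedure on $\mathcal{D}$. Then for every $k\in[n]$, \[4\int_0^{F_{\mathcal{D}}(v_k)} s_{\mathcal{Z}_0}(x)\,dx\ \ge\ V_k-\max_{i\in[k]}\Big\{v_i\sum_{j=i}^k f_{\mathcal{D}}(v_j)\Big\},\qquad V_k=\sum_{i=1}^k v_i f_{\mathcal{D}}(v_i).\]
   Context: Values and prior. $0<v_1<\dots<v_n$ are reals, and $v_0:=0$. $\mathcal{D}$ is a distribution on $\{v_1,\dots,v_n\}$ with $f_{\mathcal{D}}(v_i)>0$ and CDF $F_{\mathcal{D}}$. Signals and pricing. A signal is a distribution $S$ on these values, with $G_S(p)=\Pr_{v\sim S}[v\ge p]$. The seller posts $p^*_S$, the smallest $v$ in the support of $S$ maximizing $v\,G_S(v)$. The surplus of value $v$ is $cs_v(S)=\mathbb{1}[v\ge p^*_S](v-p^*_S)$. Signaling schemes. A signaling scheme is $\mathcal{Z}=\{(S_q,\gamma_q)\}_{q\in[Q]}$ with $\gamma_q\ge0$, $\sum\gamma_q=1$ and $\sum_q\gamma_q f_{S_q}=f_{\mathcal{D}}$. Its expected consumer surplus at $v_i$ is $cs_{v_i}(\mathcal{Z})=\sum_q cs_{v_i}(S_q)\gamma_q f_{S_q}(v_i)/f_{\mathcal{D}}(v_i)$. The surplus-mass function $s_{\mathcal{Z}}$ on $(0,1]$ equals $cs_{v_i}(\mathcal{Z})$ on $(F_{\mathcal{D}}(v_{i-1}),F_{\mathcal{D}}(v_i)]$. Special signals.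 For $a<b$, the equal-revenue binary signal $S^E_{a,b}$ puts mass $1-a/b$ on $a$ and $a/b$ on $b$. A singleton signal on $v_i$ puts mass $1$ on $v_i$. Split-and-Match procedure. 1. Initialize $g_i=t_i=\tfrac12 f_{\mathcal{D}}(v_i)$ for all $i$. 2. Repeat: - let $s$ be the smallest index with $g_s>0$; - let $\ell$ be the smallest index $>s$ with $t_\ell>0$; - if no such pair $(s,\ell)$ exists, stop; - otherwise add the signal $S^E_{v_s,v_\ell}$ with weight $\gamma=\min\{g_s/(1-v_s/v_\ell),\ t_\ell/(v_s/v_\ell)\}$; - set $g_s\leftarrow g_s-\gamma(1-v_s/v_\ell)$ and $t_\ell\leftarrow t_\ell-\gamma v_s/v_\ell$. 3. Finally, the remaining (unused) mass of $\mathcal{D}$ at each $v_i$ is covered by a singleton signal on $v_i$ with that weight. The result is $\mathcal{Z}_0$. *)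

(* Defs.v *)
(* Values are indexed by 1..n (index i <-> value v_i);
   all distributions/signals are represented by their mass function on indices. *)
From HB Require Import structures.
From mathcomp Require Import all_boot all_order all_algebra.
Set Implicit Arguments. Unset Strict Implicit. Unset Printing Implicit Defensive.
Import Order.TTheory GRing.Theory Num.Theory.
Local Open Scope ring_scope.

Section Defs.
Variable R : realFieldType.
Variable n : nat.
Variable v : nat -> R.
Variable f : nat -> R.   (* f i = f_D(v_i) *)

Definition signal := nat -> R.

Definition G (S : signal) (j : nat) : R :=
  \sum_(1 <= l < n.+1 | v j <= v l) S l.

Definition rev (S : signal) (j : nat) : R := v j * G S j.

Definition in_supp (S : signal) (j : nat) : bool := 0 < S j.

Definition is_opt (S : signal) (j : nat) : bool :=
  in_supp S j && all (fun l => in_supp S l ==> (rev S l <= rev S j)) (iota 1 n).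

Definition pstar_idx (S : signal) : nat :=
  nth 0%N (iota 1 n) (find (is_opt S) (iota 1 n)).

Definition pstar (S : signal) : R := v (pstar_idx S).

Definition cs (S : signal) (i : nat) : R :=
  if pstar S <= v i then v i - pstar S else 0.

Definition scheme := seq (signal * R).

Definition cs_scheme (Z : scheme) (i : nat) : R :=
  \sum_(q <- Z) cs q.1 i * q.2 * q.1 i / f i.

(* integral of the surplus-mass function s_Z over (0, F_D(v_k)]:
   s_Z is constant equal to cs_{v_i}(Z) on (F_D(v_{i-1}), F_D(v_i)], an
   interval of length f_D(v_i); so the integral is this finite sum. *)
Definition int_surplus_mass (Z : scheme) (k : nat) : R :=
  \sum_(1 <= i < k.+1) cs_scheme Z i * f i.

Definition SE (a b : nat) : signal :=
  fun j => if j == a then 1 - v a / v b else if j == b then v a / v b else 0.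

Definition singleton (i : nat) : signal := fun j => if j == i then 1 else 0.

Definition sm_pair (g t : nat -> R) : option (nat * nat) :=
  match [seq i <- iota 1 n | 0 < g i] with
  | [::] => None
  | s :: _ =>
      match [seq l <- iota s.+1 (n - s) | 0 < t l] with
      | [::] => None
      | l :: _ => Some (s, l)
      end
  end.

Definition sm_gamma (g t : nat -> R) (s l : nat) : R :=
  Num.min (g s / (1 - v s / v l)) (t l / (v s / v l)).

(* main loop; fuel (2n+1) suffices since each round makes one of the 2n
   quantities g_s, t_l zero and none becomes positive again *)
Fixpoint sm_loop (fuel : nat) (g t : nat -> R) (acc : scheme) : scheme :=
  match fuel with
  | 0%N => acc
  | fuel'.+1 =>
      match sm_pair g t with
      | None => acc
      | Some (s, l) =>
          let gam := sm_gamma g t s l in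
          let g' := fun j => if j == s then g s - gam * (1 - v s / v l) else g j in
          let t' := fun j => if j == l then t l - gam * (v s / v l) else t j in
          sm_loop fuel' g' t' (rcons acc (SE s l, gam))
      end
  end.

Definition sm_binary : scheme :=
  sm_loop (2 * n).+1 (fun i => f i / 2) (fun i => f i / 2) [::].

Definition Z0 : scheme :=
  sm_binary ++
  [seq (singleton i, f i - \sum_(q <- sm_binary) q.2 * q.1 i) | i <- iota 1 n].

Definition Vk (k : nat) : R := \sum_(1 <= i < k.+1) v i * f i.

(* max_{i in [k]} v_i sum_{j=i}^k f_D(v_j)  (all terms positive, so 0 is a
   harmless neutral element when k >= 1) *)
Definition maxterm (k : nat) : R :=
  \big[Num.max/0]_(1 <= i < k.+1) (v i * \sum_(i <= j < k.+1) f j).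

End Defs.

(* Main.v *)
From HB Require Import structures.
From mathcomp Require Import all_boot all_order all_algebra.
From mathcomp Require Import zify ring lra.
Require Import Defs.
Set Implicit Arguments. Unset Strict Implicit. Unset Printing Implicit Defensive.
Import Order.TTheory GRing.Theory Num.Theory.
Local Open Scope ring_scope.


Lemma filter_iota_head (P : pred nat) a m s r :
  [seq i <- iota a m | P i] = s :: r ->
  [/\ (a <= s)%N, (s < a + m)%N, P s & forall i, (a <= i)%N -> (i < s)%N -> ~~ P i].
Proof.
elim: m a => [|m IH] a //=.
case Pa: (P a) => /=.
  case=> <- _; split => //; try lia; move=> i h1 h2; lia.
move=> E; have [h1 h2 h3 h4] := IH _ E.
split => //; first lia; first lia.
move=> i hi1 hi2; case: (ltngtP a i) => [hai||<-]; last by rewrite Pa.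
  by apply: h4.
lia.
Qed.

Lemma filter_iota_nil (P : pred nat) a m :
  [seq i <- iota a m | P i] = [::] ->
  forall i, (a <= i)%N -> (i < a + m)%N -> ~~ P i.
Proof.
elim: m a => [|m IH] a /=; first by move=> _ i; lia.
case Pa: (P a) => //= E i h1 h2.
case: (ltngtP a i) => [hai||<-]; last by rewrite Pa.
  by apply: (IH a.+1) => //; lia.
lia.
Qed.

Lemma count_le (T : Type) (a1 a2 : pred T) r :
  (forall x, a1 x -> a2 x) -> (count a1 r <= count a2 r)%N.
Proof.
move=> H; elim: r => //= x r IH.
have hx : (a1 x <= a2 x)%N by move: (H x); case: (a1 x) => //= ->.
lia.
Qed.

Lemma count_lt (T : Type) (a1 a2 : pred T) r :
  (forall x, a1 x -> a2 x) -> has (fun x => a2 x && ~~ a1 x) r ->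
  (count a1 r < count a2 r)%N.
Proof.
move=> H; elim: r => //= x r IH /orP [/andP [h1 h2]|hr].
  have := count_le r H. rewrite h1 (negbTE h2) /=. lia.
have hx : (a1 x <= a2 x)%N by move: (H x); case: (a1 x) => //= ->.
have := IH hr. lia.
Qed.

Lemma sum_ind (R : realFieldType) a c p (C : R) :
  \sum_(a <= j < c) (if p == j then C else 0) = if (a <= p < c)%N then C else 0.
Proof.
rewrite -big_mkcond /= big_const_seq /=.
have -> : count (fun j => p == j) (index_iota a c) = count_mem p (index_iota a c).
  by apply: eq_count => j; rewrite eq_sym.
rewrite count_uniq_mem ?iota_uniq // mem_iota.
case: (leqP a p) => hap /=; last by [].
case: (ltnP p c) => hpc.
  have -> : (p < a + (c - a))%N by lia.
  by rewrite /= addr0.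
have -> : (p < a + (c - a))%N = false by lia.
by [].
Qed.


Lemma sum_ind_cond (R : realFieldType) a c p (P : pred nat) (C : R) :
  \sum_(a <= j < c | P j) (if p == j then C else 0) =
  if (a <= p < c)%N && P p then C else 0.
Proof.
rewrite big_mkcond /=.
rewrite (eq_bigr (fun j => if p == j then (if P p then C else 0) else 0)).
  by rewrite sum_ind; case: (a <= p < c)%N; case: (P p).
move=> j _; case: eqP => [<-|_] //; by case: (P j).
Qed.

Section Main.
Variables (R : realFieldType) (n : nat) (v f : nat -> R).
Variable hv1 : 0 < v 1%N.
Variable hvinc : forall i : nat, (1 <= i)%N -> (i < n)%N -> v i < v i.+1.

Lemma vlt i j : (1 <= i)%N -> (i < j)%N -> (j <= n)%N -> v i < v j.
Proof.
move=> h1; elim: j => [|j IH] // hij hj.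
case: (ltngtP i j) => [h|h|<-].
- apply: lt_trans (IH h _) (hvinc _ _); lia.
- lia.
- apply: hvinc; lia.
Qed.

Lemma vle i j : (1 <= i)%N -> (i <= j)%N -> (j <= n)%N -> v i <= v j.
Proof.
move=> h1 h2 h3; case: (ltngtP i j) => [h|h|<-] //.
- by apply/ltW/vlt.
- lia.
Qed.

Lemma vpos i : (1 <= i)%N -> (i <= n)%N -> 0 < v i.
Proof.
move=> h1 h2; case: (ltngtP 1 i) => [h|h|<-] //.
- exact: lt_trans hv1 (vlt _ _ _).
- lia.
Qed.

Section SEsec.
Variables (s l : nat).
Hypothesis (hs : (1 <= s)%N) (hsl : (s < l)%N) (hl : (l <= n)%N).
Let r := v s / v l.

Lemma r_pos : 0 < r.
Proof. by apply: divr_gt0; apply: vpos; lia. Qed.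

Lemma r_lt1 : r < 1.
Proof. rewrite /r ltr_pdivrMr ?mul1r; [apply: vlt|apply: vpos]; lia. Qed.

Lemma SE_split j : SE v s l j = (if s == j then 1 - r else 0) + (if l == j then r else 0).
Proof.
rewrite /SE /=; case: (eqVneq j s) => [->|hjs].
  have -> : (l == s) = false by apply/eqP; lia.
  by rewrite addr0.
by rewrite add0r eq_sym.
Qed.

Lemma G_SE j : (1 <= j <= n)%N ->
  G n v (SE v s l) j = (if v j <= v s then 1 - r else 0) + (if v j <= v l then r else 0).
Proof.
move=> hj; rewrite /G.
rewrite (eq_bigr _ (fun j _ => SE_split j)) big_split /= !sum_ind_cond.
have -> : (1 <= s < n.+1)%N by lia.
by have -> : (1 <= l < n.+1)%N by lia.
Qed.

Lemma rev_s : rev n v (SE v s l) s = v s.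
Proof.
rewrite /rev G_SE; last lia.
rewrite lexx (_ : v s <= v l); last by apply: vle; lia.
by rewrite subrK mulr1.
Qed.

Lemma rev_l : rev n v (SE v s l) l = v s.
Proof.
rewrite /rev G_SE; last lia.
rewrite lexx (_ : v l <= v s = false); last by apply/negbTE; rewrite -ltNge; apply: vlt; lia.
rewrite add0r /r mulrC divfK //; apply/lt0r_neq0/vpos; lia.
Qed.

Lemma supp_SE j : in_supp (SE v s l) j -> j = s \/ j = l.
Proof.
rewrite /in_supp /SE; case: eqP => [->|_]; first by left.
by case: eqP => [->|_]; [right | rewrite ltxx].
Qed.

Lemma opt_SE_s : is_opt n v (SE v s l) s.
Proof.
apply/andP; split.
  rewrite /in_supp /SE eqxx subr_gt0; exact: r_lt1.
apply/allP => j _; apply/implyP => /supp_SE [->|->].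
  by rewrite rev_s.
by rewrite rev_s rev_l.
Qed.

Lemma pstar_SE : pstar_idx n v (SE v s l) = s.
Proof.
have hhas : has (is_opt n v (SE v s l)) (iota 1 n).
  by apply/hasP; exists s; [rewrite mem_iota; lia | exact: opt_SE_s].
have := nth_find 0%N hhas; rewrite -/(pstar_idx n v (SE v s l)).
have hfind := hhas; rewrite has_find size_iota in hfind.
move=> /andP [/supp_SE [->|hp] _] //.
exfalso.
move: hp; rewrite /pstar_idx nth_iota // => hp.
have hb : (s - 1 < find (is_opt n v (SE v s l)) (iota 1 n))%N by lia.
have := before_find 0%N hb; rewrite nth_iota; last lia.
by rewrite (_ : (1 + (s - 1) = s)%N) ?opt_SE_s //; lia.
Qed.

Lemma cs_SE_s : cs n v (SE v s l) s = 0.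
Proof. by rewrite /cs /pstar pstar_SE lexx subrr. Qed.

Lemma cs_SE_l : cs n v (SE v s l) l = v l - v s.
Proof. by rewrite /cs /pstar pstar_SE (_ : v s <= v l) //; apply: vle; lia. Qed.

End SEsec.

Lemma pstar_sing j : (1 <= j <= n)%N -> pstar_idx n v (singleton R j) = j.
Proof.
move=> hj.
have supp : forall i, in_supp (singleton R i) j -> True by [].
have hsupp : forall i, in_supp (singleton R j) i -> i = j.
  by move=> i; rewrite /in_supp /singleton; case: eqP => // _; rewrite ltxx.
have hopt : is_opt n v (singleton R j) j.
  apply/andP; split; first by rewrite /in_supp /singleton eqxx ltr01.
  by apply/allP => i _; apply/implyP => /hsupp ->.
have hhas : has (is_opt n v (singleton R j)) (iota 1 n).
  by apply/hasP; exists j; [rewrite mem_iota; lia | exact: hopt].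
have := nth_find 0%N hhas; rewrite -/(pstar_idx n v (singleton R j)).
by move=> /andP [/hsupp].
Qed.

Lemma cs_sing j : (1 <= j <= n)%N -> cs n v (singleton R j) j = 0.
Proof. by move=> hj; rewrite /cs /pstar pstar_sing // lexx subrr. Qed.


Variable hfpos : forall i : nat, (1 <= i <= n)%N -> 0 < f i.
Variable k : nat.
Variable hk1 : (1 <= k)%N.
Variable hkn : (k <= n)%N.

Definition hmap (x : nat * nat * R) : signal R * R := (SE v x.1.1 x.1.2, x.2).

Fixpoint gl (fuel : nat) (g t : nat -> R) (L : seq (nat * nat * R)) :=
  match fuel with
  | 0%N => L
  | fuel'.+1 =>
      match sm_pair n g t with
      | None => L
      | Some (s, l) =>
          let gam := sm_gamma v g t s l in
          let g' := fun j => if j == s then g s - gam * (1 - v s / v l) else g j in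
          let t' := fun j => if j == l then t l - gam * (v s / v l) else t j in
          gl fuel' g' t' (rcons L (s, l, gam))
      end
  end.

Lemma gl_map fuel g t L :
  sm_loop n v fuel g t (map hmap L) = map hmap (gl fuel g t L).
Proof.
elim: fuel g t L => [|fuel IH] g t L //=.
case: (sm_pair n g t) => [[s l]|] //.
by rewrite -IH map_rcons.
Qed.

Definition aa (x : nat * nat * R) := x.2 * (1 - v x.1.1 / v x.1.2).
Definition bb (x : nat * nat * R) := x.2 * (v x.1.1 / v x.1.2).
Definition Sk (L : seq (nat * nat * R)) :=
  \sum_(x <- L | (x.1.2 <= k)%N) bb x * (v x.1.2 - v x.1.1).

Definition valid (x : nat * nat * R) :=
  [/\ (1 <= x.1.1)%N, (x.1.1 < x.1.2)%N, (x.1.2 <= n)%N & 0 <= x.2].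

Lemma aa_ge0 x : valid x -> 0 <= aa x.
Proof.
case=> h1 h2 h3 h4; apply: mulr_ge0 => //.
rewrite subr_ge0; apply/ltW; exact: r_lt1.
Qed.

Lemma bb_ge0 x : valid x -> 0 <= bb x.
Proof.
case=> h1 h2 h3 h4; apply: mulr_ge0 => //.
apply/ltW; exact: r_pos.
Qed.

Lemma term_ge0 x : valid x -> 0 <= bb x * (v x.1.2 - v x.1.1).
Proof.
move=> hx; apply: mulr_ge0; first exact: bb_ge0.
case: hx => h1 h2 h3 _; rewrite subr_ge0; apply: vle; lia.
Qed.

Lemma term_eq x : valid x -> bb x * (v x.1.2 - v x.1.1) = aa x * v x.1.1.
Proof.
case=> h1 h2 h3 _; rewrite /aa /bb.
have hl : v x.1.2 != 0 by apply: lt0r_neq0; apply: vpos; lia.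
by field.
Qed.

Lemma partition (T : Type) (L : seq T) (key : T -> nat) (F : T -> R) a c :
  \sum_(x <- L | (a <= key x < c)%N) F x =
  \sum_(a <= j < c) \sum_(x <- L | key x == j) F x.
Proof.
rewrite [RHS](eq_bigr (fun j => \sum_(x <- L) (if key x == j then F x else 0))); last first.
  by move=> j _; rewrite big_mkcond.
rewrite exchange_big /= big_mkcond.
by apply: eq_bigr => x _; rewrite sum_ind.
Qed.

Definition InvB (g t : nat -> R) (L : seq (nat * nat * R)) :=
  [/\ forall i, (1 <= i <= n)%N -> 0 <= g i /\ 0 <= t i,
      forall x, x \in L -> valid x /\
          forall i, (1 <= i)%N -> (i < x.1.1)%N -> g i <= 0,
      forall j, (1 <= j <= n)%N -> t j = f j / 2 - \sum_(x <- L | x.1.2 == j) bb x &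
      forall i, (1 <= i <= n)%N -> g i = f i / 2 - \sum_(x <- L | x.1.1 == i) aa x].

Definition QR (L : seq (nat * nat * R)) :=
  (exists m, [/\ (1 <= m)%N, (m <= k)%N,
      \sum_(1 <= i < m) v i * f i <= 2 * Sk L &
      \sum_(m.+1 <= j < k.+1) (v j - v m) * f j <= 2 * Sk L])
  \/ Vk v f k <= 2 * Sk L.

Definition Inv g t L :=
  InvB g t L /\ ((forall x, x \in L -> (x.1.2 <= k)%N) \/ QR L).

Lemma QR_mono L L' : Sk L <= Sk L' -> QR L -> QR L'.
Proof.
move=> hle [[m [h1 h2 h3 h4]]|h]; last by right; lra.
by left; exists m; split => //; lra.
Qed.

Lemma PtoQR g t L s : InvB g t L -> (forall x, x \in L -> (x.1.2 <= k)%N) ->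
  (1 <= s)%N -> (forall i, (1 <= i)%N -> (i < s)%N -> (i <= n)%N -> g i <= 0) ->
  ((s <= k)%N -> 0 < g s /\ forall j, (s < j)%N -> (j <= k)%N -> t j <= 0) ->
  QR L.
Proof.
move=> [hN hW hT hG] hP hs hgs hsk.
have SkE : Sk L = \sum_(1 <= i < n.+1) v i * (f i / 2 - g i).
  have -> : Sk L = \sum_(x <- L | (1 <= x.1.1 < n.+1)%N) aa x * v x.1.1.
    rewrite /Sk big_seq_cond [RHS]big_seq_cond; apply: eq_big => x.
      case hx: (x \in L) => //=; have [[h1 h2 h3 _] _] := hW x hx.
      have h4 := hP x hx; move: h1 h2 h3 h4; case: x {hx} => [[a b] c] /= h1 h2 h3 h4.
      apply/idP/idP => _; lia.
    by move=> /andP [hx _]; apply: term_eq; case: (hW x hx).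
  rewrite partition; apply: eq_big_nat => i hi.
  rewrite (hG i); last lia.
  rewrite (eq_bigr (fun x => aa x * v i)); last by move=> x /eqP ->.
  rewrite -mulr_suml; ring.
have bound1 : forall m, (1 <= m <= n.+1)%N ->
    (forall i, (1 <= i)%N -> (i < m)%N -> g i <= 0) ->
    \sum_(1 <= i < m) v i * f i <= 2 * Sk L.
  move=> m hm hg; rewrite SkE [X in _ <= 2 * X](big_cat_nat _ (n:=m)) /=; [|lia|lia].
  have e1 : \sum_(1 <= i < m) v i * (f i / 2 - g i) = (\sum_(1 <= i < m) v i * f i) / 2.
    rewrite mulr_suml; apply: eq_big_nat => i hi.
    have h1 := hg i (proj1 (andP hi)) (proj2 (andP hi)).
    have [h2 _] := hN i (ltac:(lia)).
    have -> : g i = 0 by apply/eqP; rewrite eq_le h1 h2.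
    by rewrite subr0 mulrA.
  have e2 : 0 <= \sum_(m <= i < n.+1) v i * (f i / 2 - g i).
    rewrite big_nat_cond; apply: sumr_ge0 => i /andP [hi _].
    apply: mulr_ge0; first by apply/ltW/vpos; lia.
    rewrite (hG i); last lia.
    rewrite (_ : forall a b : R, a - (a - b) = b); last by move=> a b; ring.
    rewrite big_seq_cond; apply: sumr_ge0 => x /andP [hx _].
    by apply: aa_ge0; case: (hW x hx).
  lra.
case: (leqP s k) => hsk'.
- have [hgs0 htj] := hsk hsk'.
  left; exists s; split => //.
    apply: bound1; first lia.
    move=> i h1 h2; apply: hgs => //; lia.
  have sx : forall x, x \in L -> (x.1.1 <= s)%N.
    move=> x hx; have [_ h5] := hW x hx; rewrite leqNgt; apply/negP => hlt.
    by move: (h5 s hs hlt); rewrite leNgt hgs0.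
  have step1 : \sum_(x <- L | (s < x.1.2 < k.+1)%N) bb x * (v x.1.2 - v s) <= Sk L.
    rewrite /Sk big_mkcond [X in _ <= X]big_mkcond /= big_seq [X in _ <= X]big_seq.
    apply: ler_sum => x hx.
    have [hv _] := hW x hx; have hsx := sx x hx.
    have bb0 := bb_ge0 hv; have t0 := term_ge0 hv.
    move: hv hsx bb0 t0; case: x {hx} => [[a b] c] [/= h1 h2 h3 h4] /= hsx bb0 t0.
    case: ifP => c1; case: ifP => c2.
    + apply: ler_wpM2l => //.
      apply: lerB => //; apply: vle; lia.
    + exfalso; move: c1 c2; lia.
    + by [].
    + by [].
  rewrite partition in step1.
  rewrite (eq_big_nat _ _ (F2 := fun j => f j / 2 * (v j - v s))) in step1; last first.
    move=> j hj.
    rewrite (eq_bigr (fun x => bb x * (v j - v s))); last by move=> x /eqP ->.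
    rewrite -mulr_suml.
    have [_ ht0] := hN j (ltac:(lia)).
    have htj0 : t j = 0 by apply/eqP; rewrite eq_le ht0 andbT; apply: htj; lia.
    have := hT j (ltac:(lia)); rewrite htj0 => e.
    congr (_ * _); lra.
  have e3 : \sum_(s.+1 <= j < k.+1) f j / 2 * (v j - v s) =
            (\sum_(s.+1 <= j < k.+1) (v j - v s) * f j) / 2.
    by rewrite mulr_suml; apply: eq_bigr => j _; ring.
  lra.
- right; rewrite /Vk; apply: bound1; first lia.
  move=> i h1 h2; apply: hgs => //; lia.
Qed.

Lemma bigmax_ge (F : nat -> R) (r : seq nat) i :
  i \in r -> F i <= \big[Num.max/0]_(j <- r) F j.
Proof.
elim: r => //= x r IH; rewrite inE big_cons le_max => /orP [/eqP ->|/IH ->].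
  by rewrite lexx.
by rewrite orbT.
Qed.

Lemma bigmax_ge0 (F : nat -> R) (r : seq nat) :
  0 <= \big[Num.max/0]_(j <- r) F j.
Proof.
elim: r => [|x r IH]; first by rewrite big_nil.
by rewrite big_cons le_max IH orbT.
Qed.

Lemma Vk_ge0 : 0 <= Vk v f k.
Proof.
rewrite /Vk big_nat_cond; apply: sumr_ge0 => i /andP [hi _].
apply: mulr_ge0; apply/ltW; [apply: vpos | apply: hfpos]; lia.
Qed.

Lemma QR_final L : QR L -> Vk v f k - maxterm v f k <= 4 * Sk L.
Proof.
have hm0 := bigmax_ge0 (fun i => v i * \sum_(i <= j < k.+1) f j) (index_iota 1 k.+1).
have hV := Vk_ge0.
case=> [[m [h1 h2 h3 h4]]|h]; last by rewrite /maxterm; lra.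
have hmax : v m * \sum_(m <= j < k.+1) f j <= maxterm v f k.
  by rewrite /maxterm; apply: (bigmax_ge (fun i => v i * \sum_(i <= j < k.+1) f j)); rewrite mem_iota; lia.
have e : Vk v f k - v m * \sum_(m <= j < k.+1) f j =
    \sum_(1 <= i < m) v i * f i + \sum_(m.+1 <= j < k.+1) (v j - v m) * f j.
  rewrite /Vk (big_cat_nat _ (n:=m)) /=; [|lia|lia].
  rewrite -addrA; congr (_ + _).
  rewrite mulr_sumr -sumrB (big_ltn (m:=m)); last lia.
  rewrite subrr add0r.
  by apply: eq_bigr => j _; ring.
lra.
Qed.



Lemma sm_pair_Some (g t : nat -> R) s l : sm_pair n g t = Some (s, l) ->
  [/\ (1 <= s)%N, (s <= n)%N, 0 < g s & forall i, (1 <= i)%N -> (i < s)%N -> g i <= 0] /\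
  [/\ (s < l)%N, (l <= n)%N, 0 < t l & forall j, (s < j)%N -> (j < l)%N -> t j <= 0].
Proof.
rewrite /sm_pair.
case E1: [seq i <- iota 1 n | 0 < g i] => [|s0 r0] //.
case E2: [seq i <- iota s0.+1 (n - s0) | 0 < t i] => [|l0 r1] //.
case=> <- <-.
have [h1 h2 h3 h4] := filter_iota_head E1.
have [h5 h6 h7 h8] := filter_iota_head E2.
split; split => //; try lia.
- by move=> i hi1 hi2; rewrite leNgt; apply: h4.
- by move=> j hj1 hj2; rewrite leNgt; apply: h8.
Qed.

Definition mu (g t : nat -> R) :=
  addn (count (fun i => 0 < g i) (iota 1 n)) (count (fun i => 0 < t i) (iota 1 n)).

Lemma step (g t : nat -> R) L s l : Inv g t L -> sm_pair n g t = Some (s, l) ->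
  let gam := sm_gamma v g t s l in
  let g' := fun j => if j == s then g s - gam * (1 - v s / v l) else g j in
  let t' := fun j => if j == l then t l - gam * (v s / v l) else t j in
  Inv g' t' (rcons L (s, l, gam)) /\ (mu g' t' < mu g t)%N.
Proof.
move=> [[hN hW hT hG] hM] hp gam g' t'.
have [[hs1 hsn hgs hbef] [hsl hln htl hmid]] := sm_pair_Some hp.
have r0 : 0 < v s / v l by apply: r_pos.
have r1 : v s / v l < 1 by apply: r_lt1.
have r1' : 0 < 1 - v s / v l by rewrite subr_gt0.
set r := v s / v l in r0 r1 r1' *.
have hgam : [/\ 0 <= gam, gam * (1 - r) <= g s, gam * r <= t l &
             gam * (1 - r) = g s \/ gam * r = t l].
  rewrite /gam /sm_gamma -/r.
  have rn0 : r != 0 by apply: lt0r_neq0.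
  have r1n0 : 1 - r != 0 by apply: lt0r_neq0.
  case: (leP (g s / (1 - r)) (t l / r)) => h.
  - rewrite divfK //.
    split; [by apply: divr_ge0; apply: ltW | by [] | | by left].
    by move: h; rewrite -(ler_pM2r r0) divfK.
  - rewrite divfK //.
    split; [by apply: divr_ge0; apply: ltW | | by [] | by right].
    by move: (ltW h); rewrite -(ler_pM2r r1') divfK.
have [g0 hgle htle hor] := hgam.
have hnew : valid (s, l, gam) by split.
have Sk_le : Sk L <= Sk (rcons L (s, l, gam)).
  rewrite /Sk -cats1 big_cat big_cons big_nil /=.
  case: ifP => _; last by rewrite addr0.
  rewrite addr0 lerDl; exact: (term_ge0 hnew).
have gpos : forall j, 0 < g' j -> 0 < g j.
  by move=> j; rewrite /g'; case: eqP => [->|].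
have tpos : forall j, 0 < t' j -> 0 < t j.
  by move=> j; rewrite /t'; case: eqP => [->|].
split; last first.
  rewrite /mu.
  have c1 := count_le (iota 1 n) gpos.
  have c2 := count_le (iota 1 n) tpos.
  case: hor => e.
  - have : (count (fun i => (0 < g' i)%R) (iota 1 n) < count (fun i => (0 < g i)%R) (iota 1 n))%N.
      apply: count_lt => //; apply/hasP; exists s; first by rewrite mem_iota; lia.
      by rewrite hgs /g' eqxx e subrr ltxx.
    by move=> hlt; rewrite -addSn; apply: leq_add.
  - have : (count (fun i => (0 < t' i)%R) (iota 1 n) < count (fun i => (0 < t i)%R) (iota 1 n))%N.
      apply: count_lt => //; apply/hasP; exists l; first by rewrite mem_iota; lia.
      by rewrite htl /t' eqxx e subrr ltxx.
    by move=> hlt; rewrite -addnS; apply: leq_add.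
split.
  split.
  - move=> i hi; have [h1 h2] := hN i hi; rewrite /g' /t'.
    split; [case: eqP => _ | case: eqP => _] => //; by rewrite subr_ge0.
  - move=> x; rewrite mem_rcons inE => /orP [/eqP -> | hx].
      split => // i hi1 /= hi2; rewrite /g'.
      have -> : (i == s) = false by apply/eqP; lia.
      exact: hbef.
    have [hv h5] := hW x hx.
    have sxs : (x.1.1 <= s)%N.
      rewrite leqNgt; apply/negP => hlt.
      by move: (h5 s hs1 hlt); rewrite leNgt hgs.
    split => // i hi1 hi2; rewrite /g'.
    have -> : (i == s) = false by apply/negbTE; rewrite neq_ltn (leq_trans hi2 sxs).
    exact: h5.
  - move=> j hj; rewrite -cats1 big_cat big_cons big_nil /= addr0 /t'.
    case: (eqVneq j l) => [ejl|hjl]; last by rewrite (hT j hj) addr0.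
    subst j; rewrite (hT l hj) /bb /=; ring.
  - move=> i hi; rewrite -cats1 big_cat big_cons big_nil /= addr0 /g'.
    case: (eqVneq i s) => [eis|his]; last by rewrite (hG i hi) addr0.
    subst i; rewrite (hG s hi) /aa /=; ring.
case: hM => [hP | hQR]; last by right; apply: QR_mono Sk_le hQR.
case: (leqP l k) => hlk.
  left => x; rewrite mem_rcons inE => /orP [/eqP -> // | hx]; exact: hP.
right; apply: QR_mono Sk_le _.
apply: (PtoQR (g:=g) (t:=t) (s:=s)) => //.
  by move=> i h1 h2 _; apply: hbef.
move=> hsk; split => // j h1 h2; apply: hmid => //; lia.
Qed.

Lemma loop fuel (g t : nat -> R) L : (mu g t < fuel)%N -> Inv g t L ->
  exists g' t', Inv g' t' (gl fuel g t L) /\ sm_pair n g' t' = None.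
Proof.
elim: fuel g t L => [|fuel IH] g t L //= hmu hI.
case E: (sm_pair n g t) => [[s l]|]; last by exists g, t.
have [hI' hmu'] := step hI E.
apply: IH hI'; lia.
Qed.

Lemma final (g t : nat -> R) L : Inv g t L -> sm_pair n g t = None ->
  Vk v f k - maxterm v f k <= 4 * Sk L.
Proof.
move=> [hB hM] hp; apply: QR_final.
case: hM => // hP.
move: hp; rewrite /sm_pair.
case E1: [seq i <- iota 1 n | 0 < g i] => [|s rest].
  move=> _; apply: (PtoQR (s := n.+1)) hB hP _ _ _ => //; last by move=> h; lia.
  move=> i h1 h2 h3; rewrite leNgt; apply: (filter_iota_nil E1); lia.
case E2: [seq i <- iota s.+1 (n - s) | 0 < t i] => [|l rest'] // _.
have [h1 h2 h3 h4] := filter_iota_head E1.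
have h5 := filter_iota_nil E2.
apply: (PtoQR (s := s)) hB hP _ _ _ => //.
  by move=> i hi1 hi2 _; rewrite leNgt; apply: h4.
move=> hsk; split => // j hj1 hj2; rewrite leNgt; apply: h5; lia.
Qed.


Lemma int_eq (L : seq (nat * nat * R)) (hL : forall x, x \in L -> valid x) (w : nat -> R) :
  int_surplus_mass n v f (map hmap L ++ [seq (singleton R i, w i) | i <- iota 1 n]) k = Sk L.
Proof.
rewrite /int_surplus_mass /cs_scheme.
rewrite (eq_big_nat _ _ (F2 := fun i => \sum_(q <- map hmap L ++ [seq (singleton R i, w i) | i <- iota 1 n])
     cs n v q.1 i * q.2 * q.1 i)); last first.
  move=> i hi; rewrite mulr_suml; apply: eq_bigr => q _; rewrite divfK //.
  apply: lt0r_neq0; apply: hfpos; lia.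
rewrite exchange_big big_cat /= !big_map.
rewrite [X in _ + X]big1_seq ?addr0; last first.
  move=> j /andP [_ hj]; rewrite mem_iota in hj; apply: big1 => i _ /=.
  have hs : singleton R j i = if i == j then 1 else 0 by [].
  rewrite hs; case: (eqVneq i j) => [->|hij]; last by rewrite mulr0.
  rewrite cs_sing; [by rewrite !mul0r | lia].
rewrite /Sk [RHS]big_mkcond /= [LHS]big_seq [RHS]big_seq; apply: eq_bigr => x hx.
have := hL x hx; case: x {hx} => [[s l] gam] [/= h1 h2 h3 h4].
rewrite /hmap /=.
rewrite (eq_big_nat _ _ (F2 := fun i => if l == i then (v l - v s) * gam * (v s / v l) else 0)); last first.
  move=> i hi; case: (eqVneq i s) => [->|his].
    rewrite cs_SE_s // mul0r mul0r.
    by have -> : (l == s) = false by apply/eqP; lia.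
  case: (eqVneq i l) => [->|hil].
    rewrite cs_SE_l //.
    have -> : SE v s l l = v s / v l.
      rewrite /SE /=.
      have -> : (l == s) = false by apply/eqP; lia.
      by rewrite eqxx.
    by [].
  have hSE : SE v s l i = 0 by rewrite /SE /= (negbTE his) (negbTE hil).
  by rewrite hSE mulr0.
rewrite sum_ind.
have -> : (1 <= l < k.+1)%N = (l <= k)%N by apply/idP/idP; lia.
by case: ifP => // _; rewrite /bb /=; ring.
Qed.

Lemma main_sec : Vk v f k - maxterm v f k <= 4 * int_surplus_mass n v f (Z0 n v f) k.
Proof.
have hI0 : Inv (fun i => f i / 2) (fun i => f i / 2) [::].
  split; last by left.
  split => //.
  - move=> i hi; have h := hfpos hi.
    by split; apply: divr_ge0 => //; apply: ltW.
  - by move=> j hj; rewrite big_nil subr0.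
  - by move=> j hj; rewrite big_nil subr0.
have hmu0 : (mu (fun i => f i / 2) (fun i => f i / 2) < (2 * n).+1)%N.
  rewrite /mu.
  have := count_size (fun i => (0 < f i / 2)%R) (iota 1 n).
  rewrite size_iota; lia.
have [g' [t' [hI hp]]] := loop hmu0 hI0.
have e : sm_loop n v (2 * n).+1 (fun i => f i / 2) (fun i => f i / 2) [::] =
    map hmap (gl (2 * n).+1 (fun i => f i / 2) (fun i => f i / 2) [::]) :=
  gl_map (2 * n).+1 (fun i => f i / 2) (fun i => f i / 2) [::].
rewrite /Z0 /sm_binary e int_eq.
  exact: final hI hp.
by move=> x hx; case: hI => [[_ hW _ _] _]; case: (hW x hx).
Qed.

End Main.

Theorem lemma4 (R : realFieldType) (n : nat) (v f : nat -> R)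
  (hv1 : 0 < v 1%N)
  (hvinc : forall i : nat, (1 <= i)%N -> (i < n)%N -> v i < v i.+1)
  (hfpos : forall i : nat, (1 <= i <= n)%N -> 0 < f i)
  (hfsum : \sum_(1 <= i < n.+1) f i = 1)
  (k : nat) (hk : (1 <= k <= n)%N) :
  4 * int_surplus_mass n v f (Z0 n v f) k >= Vk v f k - maxterm v f k.
Proof.
have [hk1 hkn] := andP hk.
exact: (main_sec hv1 hvinc hfpos hk1 hkn).
Qed.
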